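(* Let $G_{\mathrm{AndII}}$ be the $q$-grammar with master variables $\{x,y\}$, rule $x_j\mapsto q^jx_jy_{j+1}$, $y_j\mapsto q^{j+1}x_{j+1}$ ($j\ge0$), and order AIO, and let $D$ be its $q$-derivative. Let $\phi$ be the evaluation $\phi(x_j)=x$, $\phi(y_j)=y$ for all $j$ (commuting indeterminates). Then for all $n\ge0$, \[ \phi\big(D^n(x_0)\big)=E^{II}_{n+1}(q;x,y),\qquad\text{where } E^{II}_m(q;x,y)=\sum_{T\in\mathcal{T}^{II}_m}x^{l(T)}y^{u(T)}q^{\operatorname{inv}(T)}. \]
   Context: $\mathbb{K}$ is a commutative ring with unity and characteristic zero, $q$ an indeterminate. For a set $S$ of master variables, $\mathbb{S}=\{s_i:s\in S,\ i\ge0\}$ is a set of non-commuting variables, $F(\mathbb{S})$ the free group on $\mathbb{S}$, $\mathbb{E}=\mathbb{K}[q][F(\mathbb{S})]$ its group algebra. A rule $R$ assigns to each $s_i$ an element of $\mathbb{E}$, extended by $R(s_i^{-1})=-s_i^{-1}R(s_i)s_{i+1}^{-1}$. The up-arrow $\uparrow$ is the linear map replacing each letter $s_i^{\pm1}$ by $s_{i+1}^{\pm1}$. AIO stably reorders the letters of a word according to the position of their underlying variable in $x_0,y_0,x_1,y_1,\dots$. The $q$-derivative of a $q$-grammar $(S,R,\rho)$ is the $\mathbb{K}[q]$-linear map with $D(w_1\cdots w_n)=\sum_{j=1}^n\rho\big(w_1\cdots w_{j-1}R(w_j)\uparrow(w_{j+1}\cdots w_n)\big)$, $D^0=\mathrm{id}$,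 $D^k=D\circ D^{k-1}$; an evaluation extends to a $\mathbb{K}[q]$-linear ring morphism. An increasing binary tree on $[m]$ is a rooted tree on $\{1,\dots,m\}$ with labels increasing along paths from the root, each vertex having at most one (distinguished) left child and at most one right child. $\mathcal{T}^{II}_m$ is the set of André II trees on $[m]$: increasing binary trees in which, for every vertex with at least one child, the minimum label of the left subtree is greater than the minimum label of the right subtree (minimum of the empty tree $=+\infty$). $l(T)$ is the number of leaves, $u(T)$ the number of vertices with exactly one child. An inversion of $T$ is a pair $(i,j)$ of vertices with $i>j$ such that either (1) $j$ belongs to the right subtree of some vertex $v$ on the path from the root to $i$ whose left child is on that path; or (2) $j$ is on the path from the root to $i$ and the left child of $j$ is on that path; $\operatorname{inv}(T)$ counts inversions. *)

(* Defs.v *)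
From HB Require Import structures.
From mathcomp Require Import all_boot all_order all_algebra.
From mathcomp Require Import freeg mpoly.
Set Implicit Arguments. Unset Strict Implicit. Unset Printing Implicit Defensive.
Import Order.TTheory GRing.Theory.
Local Open Scope ring_scope.

(* A letter s_i of the master variable s : (false = x, true = y). *)
Definition letter := (bool * nat)%type.
Definition word := seq letter.

(* Linear combinations of words with coefficients in K[q] = {poly K}. *)
Definition E (K : comNzRingType) := {freeg word / {poly K}}.

Definition upw (w : word) : word := [seq (a.1, a.2.+1) | a <- w].

(* position of the underlying variable in x_0, y_0, x_1, y_1, ... *)
Definition aio_key (a : letter) : nat := (2 * a.2 + a.1)%N.

(* AIO: stable reordering of the letters (mathcomp's sort is stable) *)
Definition aio (w : word) : word := sort (fun a b => aio_key a <= aio_key b)%N w.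

Section QDeriv.
Variable K : comNzRingType.

Definition rho_lin (rho : word -> word) (F : E K) : E K :=
  fglift (fun w => << rho w >> : E K) F.

Definition mulW (u v : word) (F : E K) : E K :=
  fglift (fun w => << u ++ w ++ v >> : E K) F.

Definition qderiv_word (R : letter -> E K) (rho : word -> word) (w : word) : E K :=
  \sum_(j < size w)
    rho_lin rho (mulW (take j w) (upw (drop j.+1 w)) (R (nth (false, 0%N) w j))).

Definition qderiv (R : letter -> E K) (rho : word -> word) (F : E K) : E K :=
  fglift (qderiv_word R rho) F.

Definition rule_AndII (a : letter) : E K :=
  match a with
  | (false, j) => Freeg [:: (('X^j : {poly K}), [:: (false, j); (true, j.+1)])]
  | (true, j) => Freeg [:: (('X^(j.+1) : {poly K}), [:: (false, j.+1)])]
  end.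

Definition D_AndII : E K -> E K := qderiv rule_AndII aio.

Definition qvar : {mpoly K[3]} := 'X_(inord 0).
Definition xvar : {mpoly K[3]} := 'X_(inord 1).
Definition yvar : {mpoly K[3]} := 'X_(inord 2).

Definition embq (c : {poly K}) : {mpoly K[3]} :=
  \sum_(i < size c) c`_i *: qvar ^+ i.

Definition phi_letter (a : letter) : {mpoly K[3]} := if a.1 then yvar else xvar.

Definition phi_word (w : word) : {mpoly K[3]} := \prod_(a <- w) phi_letter a.

Definition phi (F : E K) : {mpoly K[3]} :=
  \sum_(w <- dom F) embq (coeff w F) * phi_word w.

End QDeriv.

Inductive btree := BLeaf | BNode of nat & btree & btree.

Fixpoint btree_eqb (s t : btree) : bool :=
  match s, t with
  | BLeaf, BLeaf => true
  | BNode a l r, BNode b l' r' => (a == b) && btree_eqb l l' && btree_eqb r r'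
  | _, _ => false
  end.

Lemma btree_eqP : Equality.axiom btree_eqb.
Proof.
elim=> [|a l IHl r IHr] [|b l' r'] /=; try by constructor.
case: eqP => [->|ne]; last by constructor; case.
case: IHl => [->|ne]; last by constructor; case.
case: IHr => [->|ne]; last by constructor; case.
by constructor.
Qed.

HB.instance Definition _ := hasDecEq.Build btree btree_eqP.

Fixpoint labels (t : btree) : seq nat :=
  match t with BLeaf => [::] | BNode v l r => v :: labels l ++ labels r end.

Fixpoint increasing (t : btree) : bool :=
  match t with
  | BLeaf => true
  | BNode v l r =>
      all (fun u => v < u)%N (labels l ++ labels r) && increasing l && increasing r
  end.

Definition increasing_on (m : nat) (t : btree) : bool :=
  increasing t && perm_eq (labels t) (iota 1 m).

(* minimum label, None standing for +infinity (empty tree) *)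
Definition tmin (t : btree) : option nat :=
  if labels t is a :: s then Some (foldr minn a s) else None.

Definition gt_ext (a b : option nat) : bool :=
  match a, b with
  | None, None => false
  | None, Some _ => true
  | Some _, None => false
  | Some a, Some b => (b < a)%N
  end.

Fixpoint andre_cond (t : btree) : bool :=
  match t with
  | BLeaf => true
  | BNode _ l r =>
      (((l != BLeaf) || (r != BLeaf)) ==> gt_ext (tmin l) (tmin r))
      && andre_cond l && andre_cond r
  end.

Definition andreII (m : nat) (t : btree) : bool :=
  increasing_on m t && andre_cond t.

Fixpoint nleaves (t : btree) : nat :=
  match t with
  | BLeaf => 0
  | BNode _ l r => ((l == BLeaf) && (r == BLeaf)) + nleaves l + nleaves r
  end.

Fixpoint nunary (t : btree) : nat :=
  match t with
  | BLeaf => 0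
  | BNode _ l r => ((l == BLeaf) (+) (r == BLeaf)) + nunary l + nunary r
  end.

(* positions: sequences of directions (false = left, true = right) *)
Fixpoint path_to (t : btree) (i : nat) : option (seq bool) :=
  match t with
  | BLeaf => None
  | BNode v l r =>
      if v == i then Some [::] else
      match path_to l i with
      | Some p => Some (false :: p)
      | None => omap (cons true) (path_to r i)
      end
  end.

Fixpoint subtree_at (t : btree) (p : seq bool) : btree :=
  match p, t with
  | [::], _ => t
  | b :: p', BNode _ l r => subtree_at (if b then r else l) p'
  | _ :: _, BLeaf => BLeaf
  end.

Definition root_label (t : btree) : option nat :=
  if t is BNode v _ _ then Some v else None.

(* (i, j) is an inversion of t: i > j and, writing p for the path from the
   root to i, for some vertex v = subtree_at t (take k p) on that path whose
   left child is on the path (i.e. the k-th step of p goes left), either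
   (1) j lies in the right subtree of v, or (2) j = v. *)
Definition is_inv (t : btree) (i j : nat) : bool :=
  (j < i)%N &&
  match path_to t i with
  | None => false
  | Some p =>
      has (fun k => (nth true p k == false) &&
             ((j \in labels (subtree_at t (rcons (take k p) true)))
              || (root_label (subtree_at t (take k p)) == Some j)))
          (iota 0 (size p))
  end.

Definition inv (t : btree) : nat :=
  (\sum_(i <- labels t) \sum_(j <- labels t) is_inv t i j)%N.

Definition weightII (K : comNzRingType) (t : btree) : {mpoly K[3]} :=
  xvar K ^+ nleaves t * yvar K ^+ nunary t * qvar K ^+ inv t.

Definition enumerates (P : pred btree) (s : seq btree) : Prop :=
  uniq s /\ forall t, (t \in s) = P t.

(* Main.v *)
Require Import Defs.
From HB Require Import structures.
From mathcomp Require Import all_boot all_order all_algebra.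
From mathcomp Require Import freeg mpoly.
From mathcomp Require Import zify ring.
Set Implicit Arguments. Unset Strict Implicit. Unset Printing Implicit Defensive.
Local Open Scope nat_scope.

Definition node (m : nat) := BNode m BLeaf BLeaf.
Definition shl (k : nat) (a : letter) : letter := (a.1, a.2 + k).
Definition sh (k : nat) (w : word) : word := map (shl k) w.

Fixpoint acts (t : btree) : word :=
  match t with
  | BLeaf => [::]
  | BNode v l r => acts r ++ (if l is BLeaf then [:: (r != BLeaf, size (labels r))] else [::])
                    ++ sh (size (labels r)).+1 (acts l)
  end.

Fixpoint ins (t : btree) (j m : nat) : btree :=
  match t with
  | BLeaf => BLeaf
  | BNode v l r =>
    if j < size (acts r) then BNode v l (ins r j m)
    else match l with
         | BLeaf => if r is BLeaf then BNode v BLeaf (node m) else BNode v (node m) r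
         | _ => BNode v (ins l (j - size (acts r)) m) r
         end
  end.

Definition rw (a : letter) : word :=
  if a.1 then [:: (false, a.2.+1)] else [:: (false, a.2); (true, a.2.+1)].
Definition rexp (a : letter) : nat := if a.1 then a.2.+1 else a.2.
Definition cross (A B : seq nat) := \sum_(a <- A) count (fun b => b < a) B.
Fixpoint invr (t : btree) : nat :=
  match t with
  | BLeaf => 0
  | BNode v l r => invr l + invr r + cross (labels l) (v :: labels r)
  end.
Definition lx0 : letter := (false, 0).

Lemma actsL : acts BLeaf = [::]. Proof. by []. Qed.
Lemma actsN v l r : acts (BNode v l r) = acts r ++ (if l is BLeaf then [:: (r != BLeaf, size (labels r))] else [::])
                    ++ sh (size (labels r)).+1 (acts l).
Proof. by []. Qed.
Lemma actsNL v r : acts (BNode v BLeaf r) = acts r ++ [:: (r != BLeaf, size (labels r))].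
Proof. by []. Qed.
Lemma actsNN v l r : l != BLeaf -> acts (BNode v l r) = acts r ++ sh (size (labels r)).+1 (acts l).
Proof. by case: l. Qed.
Lemma insL j m : ins BLeaf j m = BLeaf. Proof. by []. Qed.
Lemma insR v l r j m : j < size (acts r) -> ins (BNode v l r) j m = BNode v l (ins r j m).
Proof. by move=> /= ->. Qed.
Lemma insLL v j m : ins (BNode v BLeaf BLeaf) j m = BNode v BLeaf (node m).
Proof. by []. Qed.
Lemma insLN v r j m : r != BLeaf -> size (acts r) <= j -> ins (BNode v BLeaf r) j m = BNode v (node m) r.
Proof. by case: r => // w rl rr _ /=; rewrite ltnNge => ->. Qed.
Lemma insNN v l r j m : l != BLeaf -> size (acts r) <= j ->
  ins (BNode v l r) j m = BNode v (ins l (j - size (acts r)) m) r.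
Proof. by case: l => // u ll lr _ /=; rewrite ltnNge => ->. Qed.
Arguments acts : simpl never.
Arguments ins : simpl never.

Lemma size_actsNL v r : size (acts (BNode v BLeaf r)) = (size (acts r)).+1.
Proof. by rewrite actsNL size_cat addn1. Qed.
Lemma size_actsNN v l r : l != BLeaf -> size (acts (BNode v l r)) = size (acts r) + size (acts l).
Proof. by move=> H; rewrite actsNN // size_cat size_map. Qed.

Lemma upwE w : upw w = sh 1 w.
Proof. by apply: eq_map => a; rewrite /shl addn1. Qed.

Lemma sh_sh k k' w : sh k (sh k' w) = sh (k' + k) w.
Proof. by rewrite /sh -map_comp; apply: eq_map => a; rewrite /shl /= addnA. Qed.

Lemma upw_sh k w : upw (sh k w) = sh k.+1 w.
Proof. by rewrite upwE sh_sh addn1. Qed.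

Lemma rw_sh k a : rw (shl k a) = sh k (rw a).
Proof. by case: a => [[] i]; rewrite /rw /shl /sh /= ?addSn. Qed.

Lemma rexp_sh k a : rexp (shl k a) = rexp a + k.
Proof. by case: a => [[] i]; rewrite /rexp /shl /= ?addSn. Qed.

Lemma drop_catl T n (s1 s2 : seq T) : n <= size s1 -> drop n (s1 ++ s2) = drop n s1 ++ s2.
Proof.
elim: s1 n => [|x s1 IH] [|n] //=; first by case: s2.
by rewrite ltnS => /IH.
Qed.

Lemma acts_node v l r : 0 < size (acts (BNode v l r)).
Proof.
elim: l v r => [|u ll IHl lr _] v r; first by rewrite size_actsNL.
rewrite size_actsNN //; have := IHl u lr; lia.
Qed.

Lemma ins_root t j m : root_label (ins t j m) = root_label t.
Proof. by case: t => [|v l r] //; rewrite /ins; case: ifP => //; case: l => [|u ll lr] //; case: r. Qed.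

Lemma perm_mid (x : nat) s1 s2 : perm_eq (s1 ++ x :: s2) (x :: s1 ++ s2).
Proof. by rewrite (perm_catCA s1 [:: x] s2). Qed.

Lemma labels_ins t j m : j < size (acts t) -> perm_eq (labels (ins t j m)) (m :: labels t).
Proof.
elim: t j => [|v l IHl r IHr] j //= Hj.
case: (ltnP j (size (acts r))) => Hjr.
  rewrite insR //=.
  have H := IHr j Hjr.
  apply: (@perm_trans _ (v :: labels l ++ m :: labels r)).
    by rewrite perm_cons perm_cat2l.
  have := perm_mid m (v :: labels l) (labels r). by [].
have [El|lN] := eqVneq l BLeaf.
  subst l; have [Er|rN] := eqVneq r BLeaf.
    by subst r; rewrite insLL /=; have := perm_mid m [:: v] [::].
  by rewrite insLN //=; have := perm_mid m [:: v] (labels r).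
rewrite insNN //=.
have Hl : j - size (acts r) < size (acts l) by move: Hj; rewrite size_actsNN //; lia.
have H := IHl _ Hl.
apply: (@perm_trans _ (v :: (m :: labels l) ++ labels r)); first by rewrite perm_cons perm_cat2r.
exact: (perm_mid m [:: v] (labels l ++ labels r)).
Qed.

Lemma ins_neq t j m : j < size (acts t) -> ins t j m != BLeaf.
Proof. by case: t => // v l r _; have := ins_root (BNode v l r) j m; case: (ins _ _ _). Qed.

Lemma valid_neq t j : j < size (acts t) -> t != BLeaf.
Proof. by case: t. Qed.

Lemma size_labels_ins t j m : j < size (acts t) -> size (labels (ins t j m)) = (size (labels t)).+1.
Proof. by move/(labels_ins m)/perm_size. Qed.

Lemma sh_cat k s1 s2 : sh k (s1 ++ s2) = sh k s1 ++ sh k s2.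
Proof. exact: map_cat. Qed.

Lemma acts_ins t j m : j < size (acts t) ->
  acts (ins t j m) = take j (acts t) ++ rw (nth lx0 (acts t) j) ++ upw (drop j.+1 (acts t)).
Proof.
elim: t j => [|v l IHl r IHr] j // Hj.
case: (ltnP j (size (acts r))) => Hjr.
  rewrite insR // !actsN IHr // size_labels_ins // take_cat Hjr nth_cat Hjr.
  rewrite drop_catl // !upwE !sh_cat sh_sh -!catA addn1. congr (_ ++ _ ++ _ ++ _ ++ _).
  case: l {IHl Hj} => [|u ll lr] //=.
  by rewrite (ins_neq _ Hjr) (valid_neq Hjr) /shl addn1.
have [El|lN] := eqVneq l BLeaf.
  subst l; have [Er|rN] := eqVneq r BLeaf.
    subst r; move: Hj; rewrite size_actsNL /= ltnS leqn0 => /eqP ->.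
    by rewrite insLL /node !actsNL.
  have Ej : j = size (acts r) by move: Hj; rewrite size_actsNL; lia.
  subst j; rewrite insLN // actsNN // actsNL /node actsNL rN /=.
  rewrite take_size_cat // nth_cat ltnn subnn /= drop_oversize ?size_cat ?addn1 //.
have Hl : j - size (acts r) < size (acts l) by move: Hj; rewrite size_actsNN //; lia.
have Hjr1 : (j.+1 < size (acts r)) = false by apply/negbTE; rewrite -leqNgt; exact: leqW.
rewrite insNN // actsNN ?(ins_neq _ Hl) // IHl // actsNN // take_cat ltnNge Hjr /=.
rewrite nth_cat ltnNge Hjr /= drop_cat Hjr1 subSn // !sh_cat -catA; congr (_ ++ _).
rewrite /sh map_take -map_drop (nth_map lx0) // -/sh rw_sh; congr (_ ++ _ ++ _).
by rewrite upw_sh upwE -/(sh _ (sh _ _)) sh_sh add1n.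
Qed.

Lemma cross_perm1 A A' B : perm_eq A A' -> cross A B = cross A' B.
Proof. by move=> H; rewrite /cross (perm_big _ H). Qed.
Lemma cross_perm2 A B B' : perm_eq B B' -> cross A B = cross A B'.
Proof. by move=> H; rewrite /cross; apply: eq_bigr => a _; apply/permP. Qed.
Lemma cross_cons1 a A B : cross (a :: A) B = count (fun b => b < a) B + cross A B.
Proof. by rewrite /cross big_cons. Qed.
Lemma cross_nil B : cross [::] B = 0.
Proof. by rewrite /cross big_nil. Qed.
Lemma cross_consm m A B : all (fun a => a < m) A -> cross A (m :: B) = cross A B.
Proof.
move=> H; rewrite /cross big_seq [RHS]big_seq; apply: eq_bigr => a aA /=.
by rewrite ltnNge (ltnW (allP H a aA)).
Qed.
Lemma count_all_lt m B : all (fun b => b < m) B -> count (fun b => b < m) B = size B.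
Proof. by move=> H; apply/eqP; rewrite -all_count. Qed.

Lemma invr_ins t j m : j < size (acts t) -> all (fun u => u < m) (labels t) ->
  invr (ins t j m) = invr t + rexp (nth lx0 (acts t) j).
Proof.
elim: t j => [|v l IHl r IHr] j // Hj /= /andP[vm]; rewrite all_cat => /andP[lm rm].
case: (ltnP j (size (acts r))) => Hjr.
  rewrite insR //= IHr // (@cross_perm2 _ _ (m :: v :: labels r)); last first.
    have := perm_mid m [:: v] (labels r) => H2.
    apply: perm_trans H2; rewrite /= perm_cons; exact: labels_ins.
  rewrite cross_consm // actsN nth_cat Hjr; lia.
have [El|lN] := eqVneq l BLeaf.
  subst l; have [Er|rN] := eqVneq r BLeaf.
    subst r; move: Hj; rewrite size_actsNL /= ltnS leqn0 => /eqP ->.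
    by rewrite !cross_nil actsNL.
  have Ej : j = size (acts r) by move: Hj; rewrite size_actsNL; lia.
  subst j; rewrite insLN //= !cross_cons1 !cross_nil actsNL nth_cat ltnn subnn /= rN /rexp /=.
  rewrite count_all_lt /= ?vm //; lia.
have Hl : j - size (acts r) < size (acts l) by move: Hj; rewrite size_actsNN //; lia.
rewrite insNN //= IHl // (cross_perm1 _ (labels_ins m Hl)) cross_cons1 count_all_lt /= ?vm //.
rewrite actsNN // nth_cat ltnNge Hjr /= (nth_map lx0) // rexp_sh; lia.
Qed.

Lemma has_iota_S (P : pred nat) n : has P (iota 0 n.+1) = P 0 || has (fun k => P k.+1) (iota 0 n).
Proof.
rewrite /= -[1]/(1 + 0) iotaDl has_map; congr orb; apply: eq_has => k /=; by rewrite add1n.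
Qed.

Lemma has_iota_1 (P : pred nat) n : has P (iota 1 n) = has (fun k => P k.+1) (iota 0 n).
Proof. rewrite -[1]/(1 + 0) iotaDl has_map; apply: eq_has => k /=; by rewrite add1n. Qed.

Lemma path_to_None t i : (path_to t i == None) = (i \notin labels t).
Proof.
elim: t => [|v l IHl r IHr] //=; rewrite in_cons mem_cat (eq_sym i v).
case: (v == i) => //=.
case E: (path_to l i) IHl => [p|] /= Hl.
  by move: Hl; case: (i \in labels l).
move: Hl; case: (i \in labels l) => //= _.
by rewrite -IHr; case: (path_to r i).
Qed.

Lemma path_to_Some t i : i \in labels t -> exists p, path_to t i = Some p.
Proof.
move=> H; case E: (path_to t i) => [p|]; first by exists p.
by move: H; rewrite -[i \in _]negbK -path_to_None E.
Qed.

Lemma some_eq (a b : nat) : (Some a == Some b) = (b == a).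
Proof. by apply/eqP/eqP => [[]->|->]. Qed.

Lemma is_inv_root v l r j : is_inv (BNode v l r) v j = false.
Proof. by rewrite /is_inv /= eqxx andbF. Qed.

Lemma is_inv_l v l r i j : i \in labels l -> v != i ->
  is_inv (BNode v l r) i j = ((j < i) && ((j \in labels r) || (j == v))) || is_inv l i j.
Proof.
move=> il vi; have [p Hp] := path_to_Some il.
rewrite {1}/is_inv /= (negbTE vi) Hp /= has_iota_1 /= some_eq.
have -> : subtree_at r [::] = r by case: r.
by rewrite [is_inv l i j]/is_inv Hp; case: (j < i) => //=; rewrite orbA.
Qed.

Lemma is_inv_r v l r i j : i \in labels r -> i \notin labels l -> v != i ->
  is_inv (BNode v l r) i j = is_inv r i j.
Proof.
move=> ir il vi; have [p Hp] := path_to_Some ir.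
move: il; rewrite -path_to_None => /eqP Hl.
rewrite {1}/is_inv /= (negbTE vi) Hl Hp /= has_iota_1 /=. by rewrite [is_inv r i j]/is_inv Hp.
Qed.

Lemma subtree_sub t q : {subset labels (subtree_at t q) <= labels t}.
Proof.
elim: q t => [|b q IH] [|v l r] //= x /IH.
by case: b; rewrite in_cons mem_cat => ->; rewrite ?orbT.
Qed.

Lemma root_mem t j : root_label t = Some j -> j \in labels t.
Proof. by case: t => //= v l r [->]; rewrite in_cons eqxx. Qed.

Lemma is_inv_mem t i j : is_inv t i j -> j \in labels t.
Proof.
rewrite /is_inv => /andP[_]; case: (path_to t i) => // p /hasP[k _ /andP[_ /orP[H|/eqP H]]].
  exact: subtree_sub H.
exact: subtree_sub (root_mem H).
Qed.

Lemma sum_count (P : pred nat) s : \sum_(j <- s) (P j : nat) = count P s.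
Proof. by elim: s => [|x s IH]; rewrite ?big_nil ?big_cons ?IH. Qed.

Notation tinv := Defs.inv.
Lemma inv_invr t : uniq (labels t) -> tinv t = invr t.
Proof.
elim: t => [|v l IHl r IHr]; first by rewrite /Defs.inv big_nil.
rewrite /= => /andP[]; rewrite mem_cat negb_or => /andP[vl vr]; rewrite cat_uniq => /and3P[ul dlr ur].
rewrite -IHl // -IHr // /Defs.inv /= big_cons big1 ?add0n => [|j _]; last by rewrite is_inv_root.
rewrite big_cat /=.
have El : forall i, i \in labels l -> \sum_(j <- v :: labels l ++ labels r) is_inv (BNode v l r) i j
   = \sum_(j <- labels l) is_inv l i j + count (fun b => b < i) (v :: labels r).
  move=> i il; have vi : v != i by apply: contraNneq vl => ->.
  rewrite big_cons big_cat /= is_inv_l // eqxx orbT andbT.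
  have -> : is_inv l i v = false by apply/negP => /is_inv_mem; apply/negP.
  have -> : \sum_(j <- labels l) is_inv (BNode v l r) i j = \sum_(j <- labels l) is_inv l i j.
    apply: eq_big_seq => j jl.
    have jv : (j == v) = false by apply: contraNF vl => /eqP <-.
    have jr : (j \in labels r) = false by apply: contraNF dlr => jr; apply/hasP; exists j.
    by rewrite is_inv_l // jr jv andbF.
  have -> : \sum_(j <- labels r) is_inv (BNode v l r) i j = \sum_(j <- labels r) (j < i).
    apply: eq_big_seq => j jr.
    rewrite is_inv_l // jr /=; have -> : is_inv l i j = false.
      apply/negP => /is_inv_mem jl; move/negP: dlr; apply; apply/hasP; exists j => //.
    by rewrite andbT orbF.
  rewrite orbF (sum_count (fun j => j < i)) /=; lia.
have Er : forall i, i \in labels r -> \sum_(j <- v :: labels l ++ labels r) is_inv (BNode v l r) i j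
   = \sum_(j <- labels r) is_inv r i j.
  move=> i ir; have vi : v != i by apply: contraNneq vr => ->.
  have il : i \notin labels l by apply: contraNN dlr => ?; apply/hasP; exists i.
  rewrite big_cons big_cat /= is_inv_r //.
  have -> : is_inv r i v = false by apply/negP => /is_inv_mem; apply/negP.
  have -> : \sum_(j <- labels l) is_inv (BNode v l r) i j = 0.
    rewrite big1_seq // => j /= jl; rewrite is_inv_r //.
    apply/eqP; rewrite eqb0; apply/negP => /is_inv_mem jr; move/negP: dlr; apply; apply/hasP; exists j => //.
  have -> : \sum_(j <- labels r) is_inv (BNode v l r) i j = \sum_(j <- labels r) is_inv r i j.
    by apply: eq_big_seq => j _; rewrite is_inv_r.
  by [].
by rewrite (eq_big_seq _ El) (eq_big_seq _ Er) big_split /cross addnAC.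
Qed.
Local Open Scope nat_scope.

Lemma all_ins (P : pred nat) t j m : j < size (acts t) ->
  all P (labels (ins t j m)) = P m && all P (labels t).
Proof. by move=> H; rewrite (perm_all _ (labels_ins m H)). Qed.

Lemma mem_ins t j m x : j < size (acts t) -> (x \in labels (ins t j m)) = (x == m) || (x \in labels t).
Proof. by move=> H; rewrite (perm_mem (labels_ins m H)) in_cons. Qed.

Lemma incr_ins t j m : j < size (acts t) -> all (fun u => u < m) (labels t) ->
  increasing (ins t j m) = increasing t.
Proof.
elim: t j => [|v l IHl r IHr] j // Hj /= /andP[vm]; rewrite all_cat => /andP[lm rm].
case: (ltnP j (size (acts r))) => Hjr.
  by rewrite insR //= IHr // !all_cat all_ins // vm /=.
have [El|lN] := eqVneq l BLeaf.
  subst l; have [Er|rN] := eqVneq r BLeaf.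
    by subst r; rewrite insLL /= vm.
  by rewrite insLN //= vm.
have Hl : j - size (acts r) < size (acts l) by move: Hj; rewrite size_actsNN //; lia.
by rewrite insNN //= IHl // !all_cat all_ins // vm.
Qed.

Lemma foldr_minn_lt v s : all (fun u => v < u) s -> foldr minn v s = v.
Proof.
elim: s => [|x s IH] //= /andP[vx /IH ->].
by apply/minn_idPr; apply: ltnW.
Qed.

Lemma tmin_incr t : increasing t -> tmin t = root_label t.
Proof. by case: t => // v l r /= /andP[/andP[H _] _]; rewrite /tmin /= foldr_minn_lt. Qed.

Lemma incr_l v l r : increasing (BNode v l r) -> increasing l.
Proof. by case/andP=> /andP[]. Qed.
Lemma incr_r v l r : increasing (BNode v l r) -> increasing r.
Proof. by case/andP. Qed.

Lemma root_labelP t : t != BLeaf -> exists u, root_label t = Some u /\ u \in labels t.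
Proof. by case: t => // v l r _; exists v; rewrite /= in_cons eqxx. Qed.

Lemma andre_ins t j m : j < size (acts t) -> all (fun u => u < m) (labels t) -> increasing t ->
  andre_cond (ins t j m) = andre_cond t.
Proof.
elim: t j => [|v l IHl r IHr] j // Hj /= /andP[vm]; rewrite all_cat => /andP[lm rm] Hinc.
have il := incr_l Hinc; have ir := incr_r Hinc.
case: (ltnP j (size (acts r))) => Hjr.
  rewrite insR //= IHr // (ins_neq _ Hjr) (valid_neq Hjr) !orbT /=.
  have ir' : increasing (ins r j m) by rewrite incr_ins.
  by rewrite (tmin_incr ir') ins_root (tmin_incr ir).
have [El|lN] := eqVneq l BLeaf.
  subst l; have [Er|rN] := eqVneq r BLeaf.
    by subst r; rewrite insLL.
  rewrite insLN //=.
  have [u [ru ur]] := root_labelP rN.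
  by rewrite (tmin_incr ir) ru /= (allP rm u ur).
have Hl : j - size (acts r) < size (acts l) by move: Hj; rewrite size_actsNN //; lia.
rewrite insNN //= IHl // (ins_neq _ Hl) /=.
have il' : increasing (ins l (j - size (acts r)) m) by rewrite incr_ins.
by rewrite (tmin_incr il') ins_root (tmin_incr il).
Qed.

Fixpoint trem (m : nat) (t : btree) : btree :=
  match t with
  | BLeaf => BLeaf
  | BNode v l r => if r == node m then BNode v l BLeaf
                   else if l == node m then BNode v BLeaf r
                   else BNode v (trem m l) (trem m r)
  end.

Fixpoint tpos (m : nat) (t : btree) : nat :=
  match t with
  | BLeaf => 0
  | BNode v l r => if r == node m then 0
                   else if m \in labels r then tpos m r
                   else if l == node m then size (acts r)
                   else size (acts r) + tpos m l
  end.

Lemma node_neq m t : m \notin labels t -> (t == node m) = false.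
Proof. by apply: contraNF => /eqP ->; rewrite /= in_cons eqxx. Qed.

Lemma notin_lt m t : all (fun u => u < m) (labels t) -> m \notin labels t.
Proof. by move=> H; apply/negP => /(allP H); rewrite ltnn. Qed.

Lemma trem_id m t : m \notin labels t -> trem m t = t.
Proof.
elim: t => [|v l IHl r IHr] //=; rewrite in_cons mem_cat !negb_or => /and3P[_ ml mr].
by rewrite !node_neq // IHl // IHr.
Qed.

Lemma ins_size2 t j m : j < size (acts t) -> (ins t j m == node m) = false.
Proof.
move=> H; apply/negP => /eqP E.
have := size_labels_ins m H; rewrite E /=.
by case: t H {E} => // v l r _ /=; case.
Qed.

Lemma trem_tpos_ins t j m : j < size (acts t) -> all (fun u => u < m) (labels t) ->
  trem m (ins t j m) = t /\ tpos m (ins t j m) = j.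
Proof.
elim: t j => [|v l IHl r IHr] j // Hj /= /andP[vm]; rewrite all_cat => /andP[lm rm].
have mr := notin_lt rm; have ml := notin_lt lm.
case: (ltnP j (size (acts r))) => Hjr.
  have [E1 E2] := IHr _ Hjr rm.
  rewrite insR //= ins_size2 // node_neq // E1 E2 trem_id // mem_ins // eqxx.
  by [].
have [El|lN] := eqVneq l BLeaf.
  subst l; have [Er|rN] := eqVneq r BLeaf.
    by subst r; rewrite insLL; move: Hj; rewrite size_actsNL /= ltnS leqn0 => /eqP ->; rewrite /= eqxx.
  have Ej : j = size (acts r) by move: Hj; rewrite size_actsNL; lia.
  by rewrite insLN //= node_neq // (negbTE mr) eqxx Ej.
have Hl : j - size (acts r) < size (acts l) by move: Hj; rewrite size_actsNN //; lia.
have [E1 E2] := IHl _ Hl lm.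
rewrite insNN //= node_neq // (negbTE mr) ins_size2 // E1 E2 trem_id //; split => //; lia.
Qed.

Lemma ins_inj t t' j j' m : j < size (acts t) -> j' < size (acts t') ->
  all (fun u => u < m) (labels t) -> all (fun u => u < m) (labels t') ->
  ins t j m = ins t' j' m -> t = t' /\ j = j'.
Proof.
move=> H H' A A' E.
have [E1 E2] := trem_tpos_ins H A; have [E1' E2'] := trem_tpos_ins H' A'.
split; congruence.
Qed.

Lemma labels_nil t : labels t = [::] -> t = BLeaf.
Proof. by case: t. Qed.

Lemma top_node m a b : increasing (BNode m a b) -> all (fun u => u <= m) (labels (BNode m a b)) ->
  a = BLeaf /\ b = BLeaf.
Proof.
move=> /andP[/andP[H _] _] /= /andP[_ H2].
have E : labels a ++ labels b = [::].
  case: (labels a ++ labels b) H H2 => // x s /= /andP[mx _] /andP[xm _].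
  by move: (leq_trans mx xm); rewrite ltnn.
by move: E; clear; case: a => [|? ? ?]; case: b.
Qed.

Lemma ins_surj T m : increasing T -> andre_cond T -> uniq (labels T) -> m \in labels T ->
  all (fun u => u <= m) (labels T) -> root_label T != Some m ->
  exists t j, [/\ j < size (acts t), T = ins t j m & all (fun u => u < m) (labels t)].
Proof.
elim: T => [|v l IHl r IHr] // Hinc Hand.
rewrite /= => /andP[]; rewrite mem_cat negb_or => /andP[vl vr]; rewrite cat_uniq => /and3P[ul dlr ur].
rewrite in_cons mem_cat => mT /andP[vm0]; rewrite all_cat => /andP[lm0 rm0] rtm.
have vm : v < m by rewrite ltn_neqAle vm0 andbT; apply: contraNneq rtm => ->.
have il := incr_l Hinc; have ir := incr_r Hinc; clear Hinc.
move: Hand => /= /andP[/andP[Hc al] ar].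
have ltm : forall s : seq nat, all (fun u => u <= m) s -> m \notin s -> all (fun u => u < m) s.
  move=> s A N; apply/allP => x xs; rewrite ltn_neqAle (allP A x xs) andbT.
  by apply: contraNneq N => <-.
have [mr|mr] := boolP (m \in labels r).
  have ml : m \notin labels l by apply: contraNN dlr => ?; apply/hasP; exists m.
  case: r mr IHr ir ar Hc rm0 dlr ur vr mT => // u rl rr mr IHr ir ar Hc rm0 dlr ur vr mT.
  have [um|um] := eqVneq u m.
    subst u; have [-> ->] := top_node ir rm0.
    clear mT; case: l IHl il al Hc lm0 ml dlr ul vl => [|w ll lr] IHl il al Hc lm0 ml dlr ul vl.
      by exists (BNode v BLeaf BLeaf), 0; rewrite insLL size_actsNL /= vm.
    move: Hc; rewrite (tmin_incr il) (tmin_incr ir) /= => wm.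
    by move: (allP lm0 w); rewrite /= in_cons eqxx => /(_ isT); rewrite leqNgt wm.
  have [tr [jr [H1 H2 H3]]] := IHr ir ar ur mr rm0 um.
  exists (BNode v l tr), jr; rewrite insR // -H2; split => //.
    by rewrite actsN size_cat ltn_addr.
  by rewrite /= vm all_cat H3 ltm.
have ml : m \in labels l by move: mT; rewrite (negbTE mr) orbF => /orP[/eqP E|//]; rewrite E ltnn in vm.
case: l ml IHl il al Hc lm0 dlr ul vl mT => // u ll lr ml IHl il al Hc lm0 dlr ul vl mT.
have rN : r != BLeaf by move: Hc; rewrite /=; case: r {IHr ir ar rm0 dlr ur vr mr mT}.
have [um|um] := eqVneq u m.
  subst u; have [-> ->] := top_node il lm0.
  exists (BNode v BLeaf r), (size (acts r)); rewrite insLN // size_actsNL; split => //.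
  by rewrite /= vm ltm.
have [tl [jl [H1 H2 H3]]] := IHl il al ul ml lm0 um.
exists (BNode v tl r), (size (acts r) + jl).
have tlN := valid_neq H1.
rewrite insNN // ?leq_addr // addKn -H2; split => //.
  by rewrite size_actsNN // ltn_add2l.
by rewrite /= vm all_cat H3 ltm.
Qed.

Lemma acts_bound t : all (fun a => a.2 < size (labels t)) (acts t).
Proof.
elim: t => [|v l IHl r IHr] //; rewrite actsN !all_cat; apply/and3P; split.
- by apply: sub_all IHr => a /= H; rewrite size_cat; lia.
- by case: l {IHl} => //=; rewrite ltnSn.
- rewrite /sh all_map; apply: sub_all IHl => a /= H.
  rewrite size_cat; lia.
Qed.

Lemma acts_pw t : pairwise (fun a b => a.2 < b.2) (acts t).
Proof.
elim: t => [|v l IHl r IHr] //; rewrite actsN !pairwise_cat IHr /=.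
have Hsh : pairwise (fun a b => a.2 < b.2) (sh (size (labels r)).+1 (acts l)).
  by rewrite /sh pairwise_map; apply: sub_pairwise IHl => a b /=; rewrite ltn_add2r.
have Hge : all (fun b => size (labels r) < b.2) (sh (size (labels r)).+1 (acts l)).
  by rewrite /sh all_map; apply/allP => a _ /=; rewrite addnS ltnS leq_addl.
have Hr := acts_bound r.
rewrite Hsh !andbT; apply/and3P; split.
- apply/allrelP => a b ar; rewrite mem_cat => /orP[bs|bs].
    by case: l {IHl Hsh Hge} bs => // /=; rewrite mem_seq1 => /eqP -> /=; exact: (allP Hr).
  by apply: ltn_trans (allP Hr a ar) (allP Hge b bs).
- by case: l {IHl Hsh Hge}.
- by case: l {IHl Hsh} Hge => //= Hge; apply/allrelP => a b; rewrite mem_seq1 => /eqP -> /=; exact: (allP Hge).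
Qed.

Lemma aio_acts t : aio (acts t) = acts t.
Proof.
apply: sorted_sort; first by move=> a b c; apply: leq_trans.
apply: pairwise_sorted; apply: sub_pairwise (acts_pw t) => a b /= H.
rewrite /aio_key; case: a.1 H; case: b.1 => /= H; lia.
Qed.

Lemma acts_count t : andre_cond t ->
  count (fun a => ~~ a.1) (acts t) = nleaves t /\ count (fun a : letter => a.1) (acts t) = nunary t.
Proof.
elim: t => [|v l IHl r IHr] // /= /andP[/andP[Hc al] ar].
have [E1 E2] := IHl al; have [E3 E4] := IHr ar.
rewrite actsN !count_cat /sh !count_map.
have -> : count (preim (shl (size (labels r)).+1) (fun a : letter => ~~ a.1)) (acts l) = nleaves l by rewrite -E1.
have -> : count (preim (shl (size (labels r)).+1) (fun a : letter => a.1)) (acts l) = nunary l by rewrite -E2.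
rewrite E3 E4.
case: l {IHl al E1 E2} Hc => [|u ll lr] /=.
  by case: r {IHr ar E3 E4} => [|w rl rr] /=; split; lia.
by case: r {IHr ar E3 E4} => [|w rl rr] //= _; split; lia.
Qed.
Local Open Scope nat_scope.

Definition step (s : seq btree) (m : nat) : seq btree :=
  [seq ins t j m | t <- s, j <- iota 0 (size (acts t))].

Fixpoint en (n : nat) : seq btree :=
  match n with 0 => [:: node 1] | n'.+1 => step (en n') n'.+2 end.

Lemma uniq_allpairs_inj (S R : eqType) (f : S -> nat -> R) (s : seq S) (t : S -> seq nat) :
  uniq s -> (forall x, uniq (t x)) ->
  (forall x y i j, x \in s -> y \in s -> i \in t x -> j \in t y -> f x i = f y j -> x = y /\ i = j) ->
  uniq [seq f x i | x <- s, i <- t x].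
Proof.
elim: s => [|x s IH] //= /andP[xs us] ut Hinj.
rewrite cat_uniq IH ?andbT //; last first.
  by move=> y z i j ys zs; apply: Hinj; rewrite in_cons ?ys ?zs orbT.
apply/andP; split.
  rewrite map_inj_in_uniq // => i j it jt E.
  by have [] := Hinj x x i j (mem_head _ _) (mem_head _ _) it jt E.
apply/hasP => -[z /allpairsPdep[y [j [ys jt ->]]] /mapP[i it E]].
have ysx : y \in x :: s by rewrite in_cons ys orbT.
have [E1 _] := Hinj x y i j (mem_head _ _) ysx it jt (esym E).
by rewrite E1 ys in xs.
Qed.

Lemma iota_rcons n : perm_eq (iota 1 n.+2) (n.+2 :: iota 1 n.+1).
Proof.
have E := iotaD 1 n.+1 1; rewrite addn1 add1n in E.
by rewrite E perm_catC /= perm_refl.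
Qed.

Lemma lt_of_perm n t : perm_eq (labels t) (iota 1 n.+1) -> all (fun u => u < n.+2) (labels t).
Proof.
move=> H; apply/allP => x; rewrite (perm_mem H) mem_iota; lia.
Qed.

Lemma enum_step n s : enumerates (andreII n.+1) s -> enumerates (andreII n.+2) (step s n.+2).
Proof.
move=> [us Hs]; split.
  apply: uniq_allpairs_inj => //; first by move=> t; exact: iota_uniq.
  move=> x y i j xs ys; rewrite !mem_iota !add0n => /andP[_ Hi] /andP[_ Hj].
  move: xs ys; rewrite !Hs => /andP[/andP[_ px] _] /andP[/andP[_ py] _].
  by apply: ins_inj => //; apply: lt_of_perm.
move=> T; apply/idP/idP.
  move=> /allpairsPdep[t [j [ts jt ->]]].
  move: jt; rewrite mem_iota add0n => /andP[_ Hj].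
  move: ts; rewrite Hs => /andP[/andP[it pt] att].
  have A := lt_of_perm pt.
  rewrite /andreII /increasing_on incr_ins // it andre_ins // att andbT /=.
  apply: perm_trans (labels_ins _ Hj) _; rewrite perm_sym; apply: perm_trans (iota_rcons n) _.
  by rewrite perm_cons perm_sym.
move=> /andP[/andP[iT pT] aT].
have uT : uniq (labels T) by rewrite (perm_uniq pT) iota_uniq.
have mT : n.+2 \in labels T by rewrite (perm_mem pT) mem_iota; lia.
have leT : all (fun u => u <= n.+2) (labels T) by apply/allP => x; rewrite (perm_mem pT) mem_iota; lia.
have rT : root_label T != Some n.+2.
  case: T iT aT pT uT mT leT => // v a b iT aT pT uT mT leT /=; apply/eqP => -[Ev]; subst v.
  have [Ea Eb] := top_node iT leT; subst a b.
  by move/perm_size: pT; rewrite size_iota.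
have [t [j [Hj ET At]]] := ins_surj iT aT uT mT leT rT.
apply/allpairsPdep; exists t, j; split => //; last by rewrite mem_iota.
have it : increasing t by rewrite -(incr_ins Hj At) -ET.
rewrite Hs /andreII /increasing_on it -(andre_ins Hj At it) -ET aT andbT /=.
have H1 := labels_ins n.+2 Hj; rewrite -ET in H1.
change (perm_eq (labels t) (iota 1 n.+1)).
rewrite perm_sym in H1; rewrite -(perm_cons n.+2); apply: perm_trans H1 _; apply: perm_trans pT _; exact: iota_rcons.
Qed.

Lemma enum_base : enumerates (andreII 1) [:: node 1].
Proof.
split => // t; rewrite in_cons in_nil orbF.
apply/eqP/idP => [->|] //.
case: t => // v l r /andP[/andP[_ pt] _].
have := perm_size pt; have := perm_mem pt v; rewrite /= in_cons eqxx /= mem_seq1 => /esym/eqP ->.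
by rewrite size_cat; case: l {pt} => [|? ? ?]; case: r => [|? ? ?].
Qed.

Lemma en_enum n : enumerates (andreII n.+1) (en n).
Proof. by elim: n => [|n IH]; [exact: enum_base | exact: enum_step]. Qed.
Import GRing.Theory.
Local Open Scope ring_scope.

Section Alg.
Variable K : comNzRingType.
Local Notation EK := (E K).

Lemma fglift0 (M : lmodType {poly K}) (f : word -> M) : fglift f (0 : EK) = 0.
Proof. by have := lift_is_additive f 0 0; rewrite subr0 subrr. Qed.

Lemma fgliftN (M : lmodType {poly K}) (f : word -> M) (x : EK) : fglift f (- x) = - fglift f x.
Proof. by have := lift_is_additive f 0 x; rewrite sub0r fglift0 sub0r. Qed.

Lemma fgliftD (M : lmodType {poly K}) (f : word -> M) (x y : EK) : fglift f (x + y) = fglift f x + fglift f y.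
Proof. by have := lift_is_additive f x (- y); rewrite opprK fgliftN opprK. Qed.

Lemma fglift_sum (M : lmodType {poly K}) (f : word -> M) (I : Type) (s : seq I) (F : I -> EK) :
  fglift f (\sum_(i <- s) F i) = \sum_(i <- s) fglift f (F i).
Proof. by elim: s => [|x s IH]; rewrite ?big_nil ?fglift0 // !big_cons fgliftD IH. Qed.

Lemma scaleU (c k : {poly K}) (w : word) : c *: (<< k *g w >> : EK) = << c * k *g w >>.
Proof. by apply/eqP/freeg_eqP => x; rewrite coeffZ !coeffU mulrA. Qed.

Lemma rule_eq (a : letter) : rule_AndII K a = << 'X^(rexp a) *g rw a >>.
Proof. by case: a => [[] j]. Qed.

Lemma qderiv_wordE (w : word) : qderiv_word (rule_AndII K) aio w =
  \sum_(j < size w) << 'X^(rexp (nth lx0 w j)) *g aio (take j w ++ rw (nth lx0 w j) ++ upw (drop j.+1 w)) >>.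
Proof.
by apply: eq_bigr => j _; rewrite rule_eq /mulW liftU scaleU mulr1 /rho_lin liftU scaleU mulr1.
Qed.

Lemma sum_ord_iota (V : nmodType) n (F : nat -> V) : \sum_(j < n) F j = \sum_(j <- iota 0 n) F j.
Proof. by rewrite -(big_mkord xpredT) /index_iota subn0. Qed.

Definition G (t : btree) : EK := << 'X^(tinv t) *g acts t >>.

Lemma D_G n t : andreII n.+1 t ->
  D_AndII (G t) = \sum_(j <- iota 0 (size (acts t))) G (ins t j n.+2).
Proof.
move=> /andP[/andP[it pt] at0].
have A := lt_of_perm pt.
have ut : uniq (labels t) by rewrite (perm_uniq pt) iota_uniq.
rewrite /D_AndII /qderiv /G liftU qderiv_wordE scaler_sumr.
rewrite (@sum_ord_iota _ _ (fun j => 'X^(tinv t) *: << 'X^(rexp (nth lx0 (acts t) j)) *g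
   aio (take j (acts t) ++ rw (nth lx0 (acts t) j) ++ upw (drop j.+1 (acts t))) >> : EK)).
apply: eq_big_seq => j; rewrite mem_iota add0n => /andP[_ Hj].
rewrite scaleU -exprD -(acts_ins n.+2 Hj) aio_acts.
have ui : uniq (labels (ins t j n.+2)).
  rewrite (perm_uniq (labels_ins _ Hj)) /= ut andbT; apply/negP => /(allP A); by rewrite ltnn.
by rewrite inv_invr // inv_invr // invr_ins.
Qed.

Lemma main_E n : iter n (@D_AndII K) (<< [:: (false, 0%N)] >> : EK) = \sum_(t <- en n) G t.
Proof.
elim: n => [|n IH].
  rewrite /= big_seq1 /G; have -> : tinv (node 1) = 0%N by rewrite inv_invr //= cross_nil.
  by rewrite expr0 /node actsNL.
rewrite iterS IH /D_AndII /qderiv fglift_sum /=.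
rewrite /step big_allpairs_dep; apply: eq_big_seq => t ts.
have := en_enum n => -[_ Hs]; rewrite Hs in ts.
exact: D_G ts.
Qed.

Lemma embq_wide (c : {poly K}) N : (size c <= N)%N -> embq c = \sum_(i < N) c`_i *: qvar K ^+ i.
Proof.
move=> H; rewrite /embq (big_ord_widen N (fun i => c`_i *: qvar K ^+ i) H) big_mkcond.
apply: eq_bigr => i _; case: ifP => // /negbT; rewrite -leqNgt => /(nth_default 0) ->.
by rewrite scale0r.
Qed.

Lemma embq0 : embq (0 : {poly K}) = 0.
Proof. by rewrite /embq size_poly0 big_ord0. Qed.

Lemma embqD (c d : {poly K}) : embq (c + d) = embq c + embq d.
Proof.
set N := maxn (size c) (size d).
rewrite (@embq_wide (c + d) N) ?size_polyD // (@embq_wide c N) ?leq_maxl // (@embq_wide d N) ?leq_maxr //.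
by rewrite -big_split; apply: eq_bigr => i _; rewrite coefD scalerDl.
Qed.

Lemma embqX k : embq ('X^k : {poly K}) = qvar K ^+ k.
Proof.
rewrite /embq size_polyXn big_ord_recr /= coefXn eqxx scale1r big1 ?add0r // => i _.
by rewrite coefXn (ltn_eqF (ltn_ord i)) scale0r.
Qed.

Lemma phiE (F : EK) s : uniq s -> {subset dom F <= s} ->
  phi F = \sum_(w <- s) embq (coeff w F) * phi_word K w.
Proof.
move=> us sub; rewrite /phi.
rewrite [RHS](bigID (fun w => w \in dom F)) /= [X in _ = _ + X]big1 ?addr0; last first.
  by move=> w /coeff_outdom ->; rewrite embq0 mul0r.
rewrite -[RHS]big_filter; apply: perm_big; apply: uniq_perm; first exact: uniq_dom.
  exact: filter_uniq.
by move=> w; rewrite mem_filter; case: (boolP (w \in dom F)) => // /sub ->.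
Qed.

Lemma phiD (F1 F2 : EK) : phi (F1 + F2) = phi F1 + phi F2.
Proof.
set s := undup (dom F1 ++ dom F2 ++ dom (F1 + F2)).
have us : uniq s := undup_uniq _.
rewrite (@phiE (F1 + F2) s) ?(@phiE F1 s) ?(@phiE F2 s) //; first last.
- by move=> w wd; rewrite mem_undup !mem_cat wd ?orbT.
- by move=> w wd; rewrite mem_undup !mem_cat wd ?orbT.
- by move=> w wd; rewrite mem_undup !mem_cat wd ?orbT.
by rewrite -big_split; apply: eq_bigr => w _; rewrite coeffD embqD mulrDl.
Qed.

Lemma phi0 : phi (0 : EK) = 0.
Proof. by rewrite /phi dom0 big_nil. Qed.

Lemma phi_sum (I : Type) (s : seq I) (F : I -> EK) : phi (\sum_(i <- s) F i) = \sum_(i <- s) phi (F i).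
Proof. by elim: s => [|x s IH]; rewrite ?big_nil ?phi0 // !big_cons phiD IH. Qed.

Lemma phi_word_count (w : word) : phi_word K w =
  xvar K ^+ count (fun a : letter => ~~ a.1) w * yvar K ^+ count (fun a : letter => a.1) w.
Proof.
elim: w => [|a w IH]; first by rewrite /phi_word big_nil mulr1.
rewrite /phi_word big_cons -/(phi_word K w) IH /phi_letter /=.
by case: a.1; rewrite /= ?add0n ?add1n !exprS; ring.
Qed.

Lemma phi_G t : andre_cond t -> phi (G t) = weightII K t.
Proof.
move=> H; have [E1 E2] := acts_count H.
have Hd : {subset dom (G t) <= [:: acts t]}.
  by rewrite /G domU ?monic_neq0 ?monicXn.
rewrite (@phiE _ [:: acts t]) // big_seq1 /G.
by rewrite coeffU eqxx mulr1 embqX phi_word_count E1 E2 /weightII mulrC.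
Qed.

End Alg.

Unset Implicit Arguments. Set Strict Implicit. Set Printing Implicit Defensive.
Import GRing.Theory.
Local Open Scope ring_scope.

Theorem theorem6p12 (K : comNzRingType)
    (charK0 : forall k : nat, (k%:R : K) = 0 -> k = 0%N) (n : nat) :
  (exists s, enumerates (andreII n.+1) s) /\
  forall s, enumerates (andreII n.+1) s ->
    phi (iter n (@D_AndII K) (<< [:: (false, 0%N)] >> : E K))
    = \sum_(T <- s) weightII K T.
Proof.
split; first by exists (en n); exact: en_enum.
move=> s [us Hs].
have [ue He] := en_enum n.
have P : perm_eq s (en n) by apply: uniq_perm => // t; rewrite Hs He.
rewrite main_E phi_sum (perm_big _ P) /=.
by apply: eq_big_seq => t; rewrite He => /andP[_ Ha]; exact: phi_G.
Qed.
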